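(* Let $\chi_1,\dots,\chi_n,\hbar,q_1,\dots,q_n$ be indeterminates and work in the field of rational functions over $\mathbb C$. Let $M(\chi)$ be the $2n\times2n$ block matrix $\begin{bmatrix}P&Q\\S&U\end{bmatrix}$ with $n\times n$ blocks: $P_{ii}=\chi_i$, $P_{ij}=\frac{\hbar}{1-q_i/q_j}$ ($i\ne j$); $U_{ii}=-\chi_{n+1-i}$, $U_{ij}=\frac{\hbar}{1-q_{n+1-j}/q_{n+1-i}}$ ($i\ne j$); $Q_{ij}=\frac{\hbar}{1-q_iq_{n+1-j}}$ if $i+j\ne n+1$ and $Q_{ij}=0$ if $i+j=n+1$; $S_{ij}=\frac{\hbar}{1-q_{n+1-i}^{-1}q_j^{-1}}$ if $i+j\ne n+1$ and $S_{ij}=0$ if $i+j=n+1$. Let $A(\chi)$ be the $n\times n$ matrix with $A_{ii}=\chi_i$ and $$A_{ij}=\frac{\hbar(1-q_i)(1+q_j)}{(1-q_i/q_j)(1-q_iq_j)}\quad(i\ne j),$$ and $A(-\chi)$ the same matrix with each $\chi_i$ replaced by $-\chi_i$. Then $$\det M(\chi)=\det A(\chi)\cdot\det A(-\chi).$$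
   Context: In the paper $M(\chi)$ is the matrix $\Theta(-\mathbf e_1)$ for type $D_n$ and $\chi_i=\Delta_{-\mathbf e_i}$; the identity is a formal one. *)

(* Defs.v *)
From HB Require Import structures.
From mathcomp Require Import all_boot all_order all_algebra.
From mathcomp Require Import complex.
From mathcomp Require Import Rstruct.
From mathcomp Require Import mpoly.
From Stdlib Require Rdefinitions.

Set Implicit Arguments.
Unset Strict Implicit.
Unset Printing Implicit Defensive.

Import Order.TTheory GRing.Theory Num.Theory.
Local Open Scope ring_scope.

Definition Cc : Type := complex Rdefinitions.R.

(* Variable indexing ('I_((n+n).+1)):
     chi_i  = 'X_i          for i < n
     hbar   = 'X_(n+n)
     q_i    = 'X_(n+i)      for i < n                                     *)
Definition PolyRing (n : nat) := {mpoly Cc[(n + n).+1]}.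
Definition RatFun (n : nat) := {fraction PolyRing n}.

Definition var (n k : nat) : RatFun n :=
  (@FracField.tofrac (PolyRing n) ('X_(inord k))).

Definition chi (n : nat) (i : 'I_n) : RatFun n := var n i.
Definition hbar (n : nat) : RatFun n := var n (n + n).
Definition qv (n : nat) (i : 'I_n) : RatFun n := var n (n + i).

(* 0-based indices: 1-based n+1-i corresponds to rev_ord i, and
   the condition i+j = n+1 (1-based) to i+j = n-1, i.e. j = rev_ord i. *)

Definition Pblk (n : nat) : 'M[RatFun n]_n :=
  \matrix_(i, j) if i == j then chi i
                 else hbar n / (1 - qv i / qv j).

Definition Ublk (n : nat) : 'M[RatFun n]_n :=
  \matrix_(i, j) if i == j then - chi (rev_ord i)
                 else hbar n / (1 - qv (rev_ord j) / qv (rev_ord i)).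

Definition Qblk (n : nat) : 'M[RatFun n]_n :=
  \matrix_(i, j) if j == rev_ord i then 0
                 else hbar n / (1 - qv i * qv (rev_ord j)).

Definition Sblk (n : nat) : 'M[RatFun n]_n :=
  \matrix_(i, j) if j == rev_ord i then 0
                 else hbar n / (1 - (qv (rev_ord i))^-1 * (qv j)^-1).

Definition Mmat (n : nat) : 'M[RatFun n]_(n + n) :=
  block_mx (Pblk n) (Qblk n) (Sblk n) (Ublk n).

(* A(s chi) for a sign s : s = 1 gives A(chi), s = -1 gives A(-chi). *)
Definition Amat (n : nat) (s : RatFun n) : 'M[RatFun n]_n :=
  \matrix_(i, j) if i == j then s * chi i
                 else hbar n * (1 - qv i) * (1 + qv j)
                      / ((1 - qv i / qv j) * (1 - qv i * qv j)).
Arguments Amat n s : clear implicits.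
Arguments Mmat n : clear implicits.

(* Main.v *)
Require Import Defs.
From HB Require Import structures.
From mathcomp Require Import all_boot all_order all_algebra.
From mathcomp Require Import complex Rstruct mpoly.
From mathcomp Require Import ring.
From mathcomp Require Import fingroup perm.
Import GRing.Theory.
Local Open Scope ring_scope.

Section G.
Variable K : fieldType.
Implicit Types a b h x : K.
Ltac fld a0 b0 ab ba pab pba mab mba := field; rewrite ?a0 ?b0 ?ab ?ba ?pab ?pba ?mab ?mba //.
Lemma g1 a b h : a != 0 -> b != 0 -> a - b != 0 -> b - a != 0 -> 1 - a * b != 0 -> 1 - b * a != 0 -> a * b - 1 != 0 -> b * a - 1 != 0 ->
  h/(1-a/b) + h/(1-a*b)*b = h*(1-a)*(1+b)/((1-a/b)*(1-a*b)).
Proof. move=> a0 b0 ab ba pab pba mab mba; fld a0 b0 ab ba pab pba mab mba. Qed.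
Lemma g3 a b h : a != 0 -> b != 0 -> a - b != 0 -> b - a != 0 -> 1 - a * b != 0 -> 1 - b * a != 0 -> a * b - 1 != 0 -> b * a - 1 != 0 ->
  h/(1-a/b) + h/(1-a*b)*b + (a^-1*(h/(1-a^-1/b)) + a^-1*(h/(1-b/a))*b) = 0.
Proof. move=> a0 b0 ab ba pab pba mab mba; fld a0 b0 ab ba pab pba mab mba. Qed.
Lemma g4 a b h : a != 0 -> b != 0 -> a - b != 0 -> b - a != 0 -> 1 - a * b != 0 -> 1 - b * a != 0 -> a * b - 1 != 0 -> b * a - 1 != 0 ->
  h/(1-a*b)*b + a^-1*(h/(1-b/a))*b = a^-1*(h*(1-b)*(1+a)/((1-b/a)*(1-b*a)))*b.
Proof. move=> a0 b0 ab ba pab pba mab mba; fld a0 b0 ab ba pab pba mab mba. Qed.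
Lemma d3 b x : b != 0 -> x + 0*b + (b^-1*0 + b^-1 * (- x) * b) = 0.
Proof. by move=> b0; rewrite mul0r mulr0 add0r addr0 mulrN mulNr mulrAC mulVf // mul1r subrr. Qed.
Lemma d4 b x : b != 0 -> 0*b + b^-1 * (- x) * b = b^-1*(-1*x)*b.
Proof. by move=> b0; rewrite mul0r add0r mulN1r. Qed.
End G.

Section S.
Variable n : nat.

Lemma tofrac_neq0 (p : PolyRing n) (v : 'I_((n+n).+1) -> Cc) :
  p.@[v] != 0 -> (@FracField.tofrac (PolyRing n) p) != 0.
Proof.
move=> h; rewrite tofrac_eq0; apply: contra h => /eqP ->; by rewrite meval0.
Qed.

Lemma inord_nk_inj (i j : 'I_n) :
  (inord (n + i) == inord (n + j) :> 'I_((n+n).+1)) = (i == j).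
Proof.
apply/eqP/eqP => [h|->//]; apply: val_inj => /=.
have := congr1 (@nat_of_ord _) h.
have hi : (n + i < (n+n).+1)%N by rewrite ltnS leq_add2l; apply: ltnW; exact: ltn_ord.
have hj : (n + j < (n+n).+1)%N by rewrite ltnS leq_add2l; apply: ltnW; exact: ltn_ord.
rewrite (inordK hi) (inordK hj) => /eqP; rewrite eqn_add2l => /eqP //.
Qed.

Lemma qv_neq0 (i : 'I_n) : qv i != 0.
Proof.
apply: (@tofrac_neq0 _ (fun _ => 1)); by rewrite mevalXU oner_neq0.
Qed.

Lemma qv_diff (i j : 'I_n) : i != j -> qv i - qv j != 0.
Proof.
move=> hij; rewrite /qv /var -tofracB.
apply: (@tofrac_neq0 _ (fun k => if k == inord (n + i) then 1 else 0)).
have hji : (j == i) = false by rewrite eq_sym (negPf hij).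
by rewrite mevalB !mevalXU eqxx inord_nk_inj hji subr0 oner_neq0.
Qed.

Lemma qv_prod (i j : 'I_n) : 1 - qv i * qv j != 0.
Proof.
rewrite /qv /var -tofracM -tofrac1 -tofracB.
apply: (@tofrac_neq0 _ (fun k => 0)).
by rewrite mevalB mevalM !mevalXU meval1 mulr0 subr0 oner_neq0.
Qed.

Lemma qv_diff' (i j : 'I_n) : i != j -> 1 - qv i * qv j != 0.
Proof. move=> _; exact: qv_prod. Qed.

Definition rp : 'S_n := perm (@rev_ord_inj n).
Definition qr : 'rV[RatFun n]_n := \row_i qv i.
Definition qir : 'rV[RatFun n]_n := \row_i (qv i)^-1.
Definition Em : 'M[RatFun n]_(n+n) := block_mx 1%:M 0 0 (diag_mx qir *m perm_mx rp).
Definition Fm : 'M[RatFun n]_(n+n) := block_mx 1%:M 0 0 (perm_mx rp^-1 *m diag_mx qr).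
Definition Lm : 'M[RatFun n]_(n+n) := block_mx 1%:M 0 1%:M 1%:M.

Lemma eL (A : 'M[RatFun n]_n) i j : (diag_mx qir *m perm_mx rp *m A) i j = (qv i)^-1 * A (rp i) j.
Proof. by rewrite -mulmxA -row_permE mul_diag_mx !mxE. Qed.
Lemma eR (A : 'M[RatFun n]_n) i j : (A *m perm_mx rp^-1 *m diag_mx qr) i j = A i (rp j) * qv j.
Proof. by rewrite -col_permE mul_mx_diag !mxE. Qed.

Lemma EMF : Em *m Mmat n *m Fm = block_mx (Pblk n) (Qblk n *m perm_mx rp^-1 *m diag_mx qr)
  (diag_mx qir *m perm_mx rp *m Sblk n)
  (diag_mx qir *m perm_mx rp *m Ublk n *m perm_mx rp^-1 *m diag_mx qr).
Proof.
rewrite /Em /Mmat /Fm !mulmx_block !mul1mx !mul0mx !mulmx0 !mulmx1 !addr0 !add0r.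
by rewrite !mulmxA.
Qed.

Lemma Lblk (a b c d : 'M[RatFun n]_n) :
  Lm *m block_mx a b c d *m Lm = block_mx (a+b) b (a+b+(c+d)) (b+d).
Proof.
rewrite /Lm !mulmx_block !mul1mx !mul0mx !mulmx0 !mulmx1 !addr0 !add0r.
congr block_mx; rewrite ?addrA //; by rewrite (addrAC a c b).
Qed.
Lemma qv_m (i j : 'I_n) : qv i * qv j - 1 != 0.
Proof. by rewrite -oppr_eq0 opprB qv_prod. Qed.

Lemma qv_diff2 (i j : 'I_n) : i != j -> qv j - qv i != 0.
Proof. by move=> h; apply: qv_diff; rewrite eq_sym. Qed.

Ltac sidec := match goal with
 | |- is_true (qv _ != 0) => exact: qv_neq0
 | |- is_true (1 - _ != 0) => exact: qv_prod
 | |- is_true (_ * _ - 1 != 0) => exact: qv_m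
 | H : is_true (?i != ?j) |- is_true (qv ?i - qv ?j != 0) => exact: qv_diff H
 | H : is_true (?i != ?j) |- is_true (qv ?j - qv ?i != 0) => exact: qv_diff2 H
end.

Lemma addE (A B : 'M[RatFun n]_n) i j : (A + B) i j = A i j + B i j.
Proof. by rewrite mxE. Qed.
Lemma zE i j : (0 : 'M[RatFun n]_n) i j = 0.
Proof. by rewrite mxE. Qed.
Lemma B1 : Pblk n + Qblk n *m perm_mx rp^-1 *m diag_mx qr = Amat n 1.
Proof.
apply/matrixP => i j; rewrite addE eR !mxE permE !(inj_eq rev_ord_inj) rev_ordK.
case: (eqVneq i j) => [->|hij]; first by rewrite ?eqxx mul0r addr0 mul1r.
rewrite ?(negPf hij). apply: g1; sidec.
Qed.
Lemma B3 : Pblk n + Qblk n *m perm_mx rp^-1 *m diag_mx qr +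
  (diag_mx qir *m perm_mx rp *m Sblk n +
  diag_mx qir *m perm_mx rp *m Ublk n *m perm_mx rp^-1 *m diag_mx qr) = 0.
Proof.
apply/matrixP => i j; rewrite !addE zE !eR !eL !mxE !permE !(inj_eq rev_ord_inj) !rev_ordK.
case: (eqVneq i j) => [->|hij]; rewrite ?eqxx.
  by apply: d3; exact: qv_neq0.
rewrite ?(negPf hij). apply: g3; sidec.
Qed.
Lemma B4 : Qblk n *m perm_mx rp^-1 *m diag_mx qr +
  diag_mx qir *m perm_mx rp *m Ublk n *m perm_mx rp^-1 *m diag_mx qr = 
  diag_mx qir *m (Amat n (-1))^T *m diag_mx qr.
Proof.
apply/matrixP => i j; rewrite !addE !eR !eL mul_mx_diag mul_diag_mx !mxE !permE !(inj_eq rev_ord_inj) !rev_ordK.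
case: (eqVneq i j) => [->|hij]; rewrite ?eqxx.
  by apply: d4; exact: qv_neq0.
rewrite ?(negPf hij). apply: g4; sidec.
Qed.
Lemma dL : \det Lm = 1.
Proof. by rewrite /Lm det_lblock !det1 mulr1. Qed.
Lemma dq : \det (diag_mx qir) * \det (diag_mx qr) = 1.
Proof.
rewrite !det_diag -big_split /=; apply: big1 => i _; rewrite !mxE mulVf //; exact: qv_neq0.
Qed.
Lemma dEF : \det Em * \det Fm = 1.
Proof.
rewrite /Em /Fm !det_ublock !det1 !mul1r !det_mulmx !det_perm odd_permV.
rewrite mulrA -(mulrA _ _ ((-1) ^+ _)) -signr_addb addbb expr0 mulr1; exact: dq.
Qed.
End S.

Theorem mainTheorem15 (n : nat) :
  \det (Mmat n) = \det (Amat n 1) * \det (Amat n (-1)).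
Proof.
have E1 : Lm n *m (Em n *m Mmat n *m Fm n) *m Lm n =
  block_mx (Amat n 1) (Qblk n *m perm_mx (rp n)^-1 *m diag_mx (qr n)) 0
    (diag_mx (qir n) *m (Amat n (-1))^T *m diag_mx (qr n)).
  by rewrite EMF Lblk B3 B1 B4.
have := congr1 determinant E1.
rewrite det_ublock !det_mulmx det_tr dL mul1r mulr1 (mulrAC (\det (Em n))) dEF mul1r.
by rewrite (mulrAC (\det (diag_mx (qir n)))) dq mul1r.
Qed.
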